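(* Let $A\in\mathbb{R}^{m\times n}$ with $m>n$ be a full-rank standardized matrix with no two distinct rows parallel, let $x\in\mathbb{R}^n$, and let $b=Ax$. Let $x_k$ denote the $k$-th iterate of the two-subspace Kaczmarz method applied to $(A,b)$ from a deterministic starting point $x_0$. Then for every $k\ge 0$, $$\mathbb{E}\|x-x_k\|_2^2\le\left(\left(1-\frac1R\right)^2-\frac{D}{R}\right)^k\|x-x_0\|_2^2,$$ where $D=\min\left\{\frac{\delta^2(1-\delta)}{1+\delta},\frac{\Delta^2(1-\Delta)}{1+\Delta}\right\}$.
   Context: $A\in\mathbb{R}^{m\times n}$ has rows $a_1,\dots,a_m$. It is called standardized if $\|a_i\|_2=1$ for all $i$. ''No two distinct rows parallel'' means $|\langle a_r,a_s\rangle|<1$ for all $r\ne s$. Two-subspace Kaczmarz method for $(A,b)$, $b\in\mathbb{R}^m$: start from $x_0\in\mathbb{R}^n$. For $k=1,2,\dots$, choose an ordered pair $(r,s)$ of distinct indices in $\{1,\dots,m\}$ uniformly at random among the $m^2-m$ such pairs, independently of all previous choices. Then set $\mu_k=\langle a_r,a_s\rangle$, $y_k=x_{k-1}+(b_s-\langle x_{k-1},a_s\rangle)a_s$, $v_k=\frac{a_r-\mu_k a_s}{\sqrt{1-\mu_k^2}}$, $\beta_k=\frac{b_r-b_s\mu_k}{\sqrt{1-\mu_k^2}}$, and $x_k=y_k+(\beta_k-\langle y_k,v_k\rangle)v_k$. Coherence parameters: $\Delta=\max_{j\ne k}|\langle a_j,a_k\rangle|$ and $\delta=\min_{j\ne k}|\langle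 a_j,a_k\rangle|$. Scaled condition number: $R=\|A\|_F^2\|A^{-1}\|^2$, where $\|A^{-1}\|=\inf\{M: M\|Az\|_2\ge\|z\|_2\ \text{for all } z\}$, i.e. the reciprocal of the smallest singular value of $A$. *)

(* Defs.v *)
From Stdlib Require Import Reals Lra Lia.
Open Scope R_scope.

(* Vectors in R^n are functions nat -> R (only indices < n matter);
   an m x n matrix is a function nat -> nat -> R (entries A i j, i < m, j < n). *)

Fixpoint sumR (n : nat) (f : nat -> R) : R :=
  match n with
  | O => 0
  | S k => sumR k f + f k
  end.

Definition dot (n : nat) (u v : nat -> R) : R := sumR n (fun i => u i * v i).
Definition vnorm (n : nat) (u : nat -> R) : R := sqrt (dot n u u).

Definition row (A : nat -> nat -> R) (i : nat) : nat -> R := fun j => A i j.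

Definition matvec (n : nat) (A : nat -> nat -> R) (z : nat -> R) : nat -> R :=
  fun i => sumR n (fun j => A i j * z j).

Definition vsub (u v : nat -> R) : nat -> R := fun i => u i - v i.

Definition standardized (m n : nat) (A : nat -> nat -> R) : Prop :=
  forall i, (i < m)%nat -> vnorm n (row A i) = 1.

Definition no_two_rows_parallel (m n : nat) (A : nat -> nat -> R) : Prop :=
  forall r s, (r < m)%nat -> (s < m)%nat -> r <> s ->
    Rabs (dot n (row A r) (row A s)) < 1.

(* full rank for m > n: rank n, i.e. the n columns are linearly independent *)
Definition full_column_rank (m n : nat) (A : nat -> nat -> R) : Prop :=
  forall z : nat -> R,
    (forall i, (i < m)%nat -> matvec n A z i = 0) ->
    forall j, (j < n)%nat -> z j = 0.

Definition frob_sq (m n : nat) (A : nat -> nat -> R) : R :=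
  sumR m (fun i => sumR n (fun j => (A i j) ^ 2)).

(* Ainv is ||A^{-1}|| = inf { M : M ||Az|| >= ||z|| for all z } *)
Definition inv_norm_set (m n : nat) (A : nat -> nat -> R) (M : R) : Prop :=
  forall z : nat -> R, M * vnorm m (matvec n A z) >= vnorm n z.

Definition is_inf (P : R -> Prop) (a : R) : Prop :=
  (forall M, P M -> a <= M) /\ (forall b, (forall M, P M -> b <= M) -> b <= a).

Definition is_max_coherence (m n : nat) (A : nat -> nat -> R) (D : R) : Prop :=
  (forall j k, (j < m)%nat -> (k < m)%nat -> j <> k ->
      Rabs (dot n (row A j) (row A k)) <= D) /\
  (exists j k, (j < m)%nat /\ (k < m)%nat /\ j <> k /\
      Rabs (dot n (row A j) (row A k)) = D).

Definition is_min_coherence (m n : nat) (A : nat -> nat -> R) (d : R) : Prop :=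
  (forall j k, (j < m)%nat -> (k < m)%nat -> j <> k ->
      d <= Rabs (dot n (row A j) (row A k))) /\
  (exists j k, (j < m)%nat /\ (k < m)%nat /\ j <> k /\
      Rabs (dot n (row A j) (row A k)) = d).

Definition tsk_step (n : nat) (A : nat -> nat -> R) (b : nat -> R)
    (xprev : nat -> R) (r s : nat) : nat -> R :=
  let ar := row A r in
  let as_ := row A s in
  let mu := dot n ar as_ in
  let y := fun i => xprev i + (b s - dot n xprev as_) * as_ i in
  let v := fun i => (ar i - mu * as_ i) / sqrt (1 - mu ^ 2) in
  let beta := (b r - b s * mu) / sqrt (1 - mu ^ 2) in
  fun i => y i + (beta - dot n y v) * v i.

(* Expected value of ||x - x_k||_2^2, where x_k is the k-th iterate started
   from the deterministic x0, and the pairs (r,s), r <> s, are drawn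
   independently and uniformly among the m^2 - m ordered pairs.  Computed by
   conditioning on the first pair (exact finite average over all sequences). *)
Fixpoint expected_err (m n : nat) (A : nat -> nat -> R) (b x : nat -> R)
    (k : nat) (x0 : nat -> R) : R :=
  match k with
  | O => (vnorm n (vsub x x0)) ^ 2
  | S k' =>
      / (INR m * INR m - INR m) *
      sumR m (fun r => sumR m (fun s =>
        if Nat.eq_dec r s then 0
        else expected_err m n A b x k' (tsk_step n A b x0 r s)))
  end.

(* Main.v *)
Require Import Defs.
From Stdlib Require Import Reals Lra Lia Psatz.
Open Scope R_scope.

Lemma sumR_ext n f g : (forall i, (i < n)%nat -> f i = g i) -> sumR n f = sumR n g.
Proof. induction n; simpl; intros H; [reflexivity|].
  rewrite IHn by (intros; apply H; lia). rewrite H by lia. reflexivity. Qed.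

Lemma sumR_le n f g : (forall i, (i<n)%nat -> f i <= g i) -> sumR n f <= sumR n g.
Proof. induction n; simpl; intros H; [lra|].
  assert (f n <= g n) by (apply H; lia).
  assert (sumR n f <= sumR n g) by (apply IHn; intros; apply H; lia). lra. Qed.

Lemma sumR_plus n f g : sumR n (fun i => f i + g i) = sumR n f + sumR n g.
Proof. induction n; simpl; [ring|rewrite IHn; ring]. Qed.
Lemma sumR_minus n f g : sumR n (fun i => f i - g i) = sumR n f - sumR n g.
Proof. induction n; simpl; [ring|rewrite IHn; ring]. Qed.
Lemma sumR_scal n c f : sumR n (fun i => c * f i) = c * sumR n f.
Proof. induction n; simpl; [ring|rewrite IHn; ring]. Qed.
Lemma sumR_const n c : sumR n (fun _ => c) = INR n * c.
Proof. induction n. - simpl; ring.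
  - change (sumR (S n) (fun _ => c)) with (sumR n (fun _ => c) + c). rewrite IHn, S_INR. ring. Qed.
Lemma sumR_nonneg n f : (forall i, (i<n)%nat -> 0 <= f i) -> 0 <= sumR n f.
Proof. intros H. rewrite <- (Rmult_0_r (INR n)). rewrite <- sumR_const. apply sumR_le. exact H. Qed.
Lemma sumR_swap m k f : sumR m (fun r => sumR k (fun s => f r s)) = sumR k (fun s => sumR m (fun r => f r s)).
Proof. induction m; simpl.
  - rewrite sumR_const. ring.
  - rewrite IHm. rewrite <- sumR_plus. reflexivity. Qed.
Lemma sumR_neq_l m s f : (s < m)%nat -> sumR m (fun r => if Nat.eq_dec r s then 0 else f r) = sumR m f - f s.
Proof. induction m; intros H; [lia|]. simpl. destruct (Nat.eq_dec m s).
  - subst s. rewrite (sumR_ext _ _ f). ring. intros i Hi; destruct (Nat.eq_dec i m); [lia|reflexivity].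
  - rewrite IHm by lia. ring. Qed.
Lemma sumR_neq_r m r f : (r < m)%nat -> sumR m (fun s => if Nat.eq_dec r s then 0 else f s) = sumR m f - f r.
Proof. intros H. rewrite <- sumR_neq_l by exact H. apply sumR_ext. intros i _.
  destruct (Nat.eq_dec r i), (Nat.eq_dec i r); subst; try lia; reflexivity. Qed.
Lemma sumR_sq_zero n g : sumR n (fun i => g i * g i) = 0 -> forall i, (i<n)%nat -> g i = 0.
Proof. induction n; simpl; intros H i Hi; [lia|].
  assert (0 <= sumR n (fun i => g i * g i)) by (apply sumR_nonneg; intros; nra).
  assert (0 <= g n * g n) by nra.
  destruct (Nat.eq_dec i n). - subst. nra.
  - apply IHn; [lra|lia]. Qed.

Lemma dot_nonneg n u : 0 <= dot n u u.
Proof. unfold dot. apply sumR_nonneg. intros; nra. Qed.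
Lemma vnorm_sq n u : vnorm n u ^ 2 = dot n u u.
Proof. unfold vnorm. apply pow2_sqrt, dot_nonneg. Qed.
Lemma dot_comm n u v : dot n u v = dot n v u.
Proof. unfold dot. apply sumR_ext. intros; ring. Qed.

Lemma L_dot3 n e c a p q : sumR n (fun i => (e i + p*c i + q*a i)*(e i + p*c i + q*a i)) =
  sumR n (fun i => e i * e i) + p^2 * sumR n (fun i => c i * c i) + q^2 * sumR n (fun i => a i * a i)
  + 2*p*sumR n (fun i => e i * c i) + 2*q*sumR n (fun i => e i * a i) + 2*p*q*sumR n (fun i => a i * c i).
Proof. induction n; simpl; [ring| rewrite IHn; ring]. Qed.
Lemma L_yv n u c a kap mu sq : sumR n (fun i => (u i + kap*c i)*((a i - mu*c i)/sq)) =
  (sumR n (fun i => u i * a i) - mu*sumR n (fun i => u i*c i) + kap * sumR n (fun i => a i * c i)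
   - kap*mu*sumR n (fun i => c i * c i))/sq.
Proof. induction n; simpl; [unfold Rdiv; ring| rewrite IHn; unfold Rdiv; ring]. Qed.
Lemma L_diff n u w c : sumR n (fun i => (u i - w i) * c i) = sumR n (fun i => c i * u i) - sumR n (fun i => w i * c i).
Proof. induction n; simpl; [ring| rewrite IHn; ring]. Qed.

Lemma step_err n A (x b x0 : nat -> R) r s :
  b r = matvec n A x r -> b s = matvec n A x s ->
  dot n (row A r) (row A r) = 1 -> dot n (row A s) (row A s) = 1 ->
  Rabs (dot n (row A r) (row A s)) < 1 ->
  vnorm n (vsub x (tsk_step n A b x0 r s)) ^ 2 =
  dot n (vsub x x0) (vsub x x0) - (dot n (vsub x x0) (row A s))^2
   - (dot n (vsub x x0) (row A r) - dot n (row A r) (row A s) * dot n (vsub x x0) (row A s))^2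
     / (1 - (dot n (row A r) (row A s))^2).
Proof.
  intros Hbr Hbs Ha Hc Hmu.
  rewrite vnorm_sq. unfold tsk_step. cbv zeta.
  set (mu := dot n (row A r) (row A s)) in *.
  assert (Hmu2 : 0 < 1 - mu^2) by (destruct (Rabs_def2 _ _ Hmu); nra).
  set (sq := sqrt (1 - mu^2)).
  assert (Hsq : sq * sq = 1 - mu^2) by (apply sqrt_sqrt; lra).
  assert (Hsq0 : sq <> 0) by (intro H0; rewrite H0 in Hsq; lra).
  set (kap := b s - dot n x0 (row A s)).
  set (g := (b r - b s * mu) / sq - dot n (fun i => x0 i + kap * row A s i) (fun i => (row A r i - mu * row A s i) / sq)).
  set (e := vsub x x0).
  set (p := - kap + g * mu / sq). set (q := - g / sq).
  unfold dot at 1.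
  rewrite (sumR_ext _ _ (fun i => (e i + p * row A s i + q * row A r i) * (e i + p * row A s i + q * row A r i))).
  2:{ intros i _. unfold e, p, q, vsub. field. exact Hsq0. }
  rewrite L_dot3.
  assert (Hkap : kap = dot n e (row A s)).
  { unfold kap, e, dot, vsub. rewrite Hbs. unfold matvec. rewrite L_diff. reflexivity. }
  assert (Hg : g = (dot n e (row A r) - mu * dot n e (row A s)) / sq).
  { unfold g. unfold dot at 1. rewrite L_yv. fold (dot n x0 (row A r)) (dot n x0 (row A s)).
    fold (dot n (row A r) (row A s)) (dot n (row A s) (row A s)). fold mu. rewrite Hc.
    assert (E1 : dot n e (row A r) = b r - dot n x0 (row A r)).
    { unfold e, dot, vsub. rewrite Hbr. unfold matvec. rewrite L_diff. reflexivity. }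
    rewrite E1, <- Hkap. unfold kap. field. exact Hsq0. }
  fold (dot n e e) (dot n (row A s) (row A s)) (dot n (row A r) (row A r)) (dot n e (row A s))
       (dot n e (row A r)) (dot n (row A r) (row A s)).
  fold mu. rewrite Ha, Hc.
  unfold p, q. rewrite Hg, <- Hkap.
  rewrite <- Hsq. clearbody sq kap. generalize (dot n e (row A r)) (dot n e e). intros. clearbody mu. apply Rminus_diag_uniq. transitivity (((r0 - mu*kap)/(sq*sq))^2 * (1 - mu^2 - sq*sq)); [field; exact Hsq0|]. rewrite Hsq. ring.
Qed.

Definition hfun (t : R) := t ^ 2 * (1 - t) / (1 + t).

Lemma pair_ineq a b mu D : Rabs mu < 1 -> D <= hfun (Rabs mu) ->
  D * (a^2 + b^2) <= mu^2 * (a - mu*b)^2 / (1 - mu^2) + mu^2 * (b - mu*a)^2 / (1 - mu^2).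
Proof.
  intros Hmu HD. set (t := Rabs mu) in *.
  assert (Ht0 : 0 <= t) by apply Rabs_pos.
  assert (Hmt : mu^2 = t^2) by (unfold t; rewrite pow2_abs; reflexivity).
  assert (Hab : 2 * (mu*a*b) <= t * (a^2+b^2)).
  { assert (mu*a*b <= t * Rabs (a*b)).
    { unfold t. rewrite <- Rabs_mult.
      replace (mu*a*b) with (mu*(a*b)) by ring. apply Rle_abs. }
    assert (2 * Rabs (a*b) <= a^2+b^2).
    { destruct (Rle_dec 0 (a*b)).
      - rewrite Rabs_pos_eq by lra. pose proof (pow2_ge_0 (a-b)); lra.
      - rewrite Rabs_left by lra. pose proof (pow2_ge_0 (a+b)); lra. }
    nra. }
  assert (Hq : (1-t)^2 * (a^2+b^2) <= (a - mu*b)^2 + (b - mu*a)^2) by nra.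
  assert (H1 : 0 < 1 - t) by lra.
  assert (Hh : hfun t = t^2 * (1-t)^2 / (1 - mu^2)).
  { unfold hfun. rewrite Hmt. field. split; nra. }
  replace (mu^2 * (a - mu*b)^2 / (1 - mu^2) + mu^2 * (b - mu*a)^2 / (1 - mu^2))
    with (mu^2 / (1-mu^2) * ((a - mu*b)^2 + (b - mu*a)^2)) by (field; nra).
  assert (HD2 : D <= t^2 * (1-t)^2 / (1 - mu^2)) by (rewrite <- Hh; exact HD).
  assert (Hs : 0 <= a^2 + b^2) by nra.
  apply Rle_trans with (t^2 * (1-t)^2 / (1 - mu^2) * (a^2+b^2)).
  - apply Rmult_le_compat_r; assumption.
  - rewrite Hmt. unfold Rdiv.
    assert (0 < / (1 - t^2)) by (apply Rinv_0_lt_compat; nra).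
    assert (0 <= t^2 * / (1 - t^2)) by nra.
    nra.
Qed.

Lemma final_alg M u E S : 2 <= M -> 0 < u -> 0 <= E -> u * E <= S -> 0 <= M*E - S ->
  (M-1-u)*(M*E-S) <= (M*M - M) * (1 - u/M)^2 * E.
Proof.
  intros HM Hu HE HS HS2.
  assert (Hr : (M*M - M) * (1 - u/M)^2 * E = (M-1)*(M-u)^2/M * E) by (field; lra).
  rewrite Hr.
  destruct (Rle_dec 0 (M-1-u)).
  - apply Rle_trans with ((M-1-u)*(M-u)*E).
    + assert (M*E - S <= (M-u)*E) by nra. nra.
    + assert ((M-1)*(M-u)^2/M - (M-1-u)*(M-u) = (M-u)*u/M) by (field; lra).
      assert (0 <= (M-u)*u/M). { apply Rmult_le_pos; [|left; apply Rinv_0_lt_compat; lra]. nra. }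
      nra.
  - assert (0 <= (M-1)*(M-u)^2/M).
    { apply Rmult_le_pos; [|left; apply Rinv_0_lt_compat; lra]. apply Rmult_le_pos; [lra | apply pow2_ge_0]. }
    nra.
Qed.

Lemma L_mv n c e k d : sumR n (fun j => c j * (e j - k * d j)) =
  sumR n (fun j => e j * c j) - k * sumR n (fun j => c j * d j).
Proof. induction n; simpl; [ring| rewrite IHn; ring]. Qed.
Lemma L_ff n e k d : sumR n (fun j => (e j - k * d j) * (e j - k * d j)) =
  sumR n (fun j => e j * e j) - 2 * k * sumR n (fun j => e j * d j) + k^2 * sumR n (fun j => d j * d j).
Proof. induction n; simpl; [ring| rewrite IHn; ring]. Qed.

Lemma avg_step m n A b x Ai2 D x0 :
  (2 <= m)%nat ->
  (forall i, (i<m)%nat -> b i = matvec n A x i) ->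
  (forall i, (i<m)%nat -> dot n (row A i) (row A i) = 1) ->
  (forall r s, (r<m)%nat -> (s<m)%nat -> r<>s -> Rabs (dot n (row A r) (row A s)) < 1) ->
  0 < Ai2 ->
  (forall z, dot n z z <= Ai2 * sumR m (fun i => matvec n A z i * matvec n A z i)) ->
  0 <= D ->
  (forall r s, (r<m)%nat -> (s<m)%nat -> r<>s -> D <= hfun (Rabs (dot n (row A r) (row A s)))) ->
  sumR m (fun r => sumR m (fun s => if Nat.eq_dec r s then 0
      else vnorm n (vsub x (tsk_step n A b x0 r s)) ^ 2))
  <= (INR m * INR m - INR m) * ((1 - /Ai2 / INR m)^2 - D * /Ai2 / INR m)
      * dot n (vsub x x0) (vsub x x0).
Proof.
  intros Hm Hb Hstd Hpar HAi HAz HD0 HD.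
  set (e := vsub x x0).
  set (E := dot n e e).
  set (u := / Ai2).
  set (S := sumR m (fun i => dot n e (row A i) ^ 2)).
  set (T1 := fun r s => E - dot n e (row A s) ^ 2
        - (dot n e (row A r) - dot n (row A r) (row A s) * dot n e (row A s))^2).
  set (T2 := fun r s => dot n (row A r) (row A s) ^ 2 *
        (dot n e (row A r) - dot n (row A r) (row A s) * dot n e (row A s))^2
        / (1 - dot n (row A r) (row A s) ^ 2)).
  assert (Hu : 0 < u) by (apply Rinv_0_lt_compat; exact HAi).
  assert (Hmr : 2 <= INR m) by (apply (le_INR 2); exact Hm).
  rewrite (sumR_ext _ _ (fun r => sumR m (fun s => (if Nat.eq_dec r s then 0 else T1 r s)
                                                 - (if Nat.eq_dec r s then 0 else T2 r s)))).
  2:{ intros r Hr. apply sumR_ext. intros s Hs. destruct (Nat.eq_dec r s); [ring|].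
      rewrite step_err; auto. unfold T1, T2. fold e.
      assert (0 < 1 - dot n (row A r) (row A s) ^ 2).
      { destruct (Rabs_def2 _ _ (Hpar r s Hr Hs n0)). nra. }
      fold E. field. lra. }
  rewrite (sumR_ext _ _ (fun r => sumR m (fun s => if Nat.eq_dec r s then 0 else T1 r s)
                   - sumR m (fun s => if Nat.eq_dec r s then 0 else T2 r s))).
  2:{ intros r _. apply sumR_minus. }
  rewrite sumR_minus.
  assert (HF : forall s, (s < m)%nat ->
     E - dot n e (row A s) ^ 2 = dot n (fun j => e j - dot n e (row A s) * A s j)
                                       (fun j => e j - dot n e (row A s) * A s j)).
  { intros s Hs. unfold E. pose proof (Hstd s Hs) as Hs1. unfold dot, row in *. rewrite L_ff.
    rewrite Hs1. ring. }
  assert (HA : sumR m (fun r => sumR m (fun s => if Nat.eq_dec r s then 0 else T1 r s))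
               <= (INR m - 1 - u) * (INR m * E - S)).
  { rewrite sumR_swap.
    apply Rle_trans with (sumR m (fun s => (INR m - 1 - u) * (E - dot n e (row A s) ^ 2))).
    2:{ rewrite sumR_scal, sumR_minus, sumR_const. right. reflexivity. }
    apply sumR_le. intros s Hs.
    rewrite sumR_neq_l by exact Hs.
    unfold T1 at 2. rewrite Hstd by exact Hs.
    unfold T1. rewrite sumR_minus, sumR_minus, sumR_const.
    assert (Hq := HAz (fun j => e j - dot n e (row A s) * A s j)).
    rewrite <- (HF s Hs) in Hq.
    unfold matvec in Hq.
    rewrite (sumR_ext m (fun i => sumR n (fun j => A i j * (e j - dot n e (row A s) * A s j)) *
             sumR n (fun j => A i j * (e j - dot n e (row A s) * A s j)))
             (fun r => (dot n e (row A r) - dot n (row A r) (row A s) * dot n e (row A s)) ^ 2)) in Hq.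
    2:{ intros i _. rewrite L_mv. change (sumR n (fun j => e j * A i j)) with (dot n e (row A i)).
        change (sumR n (fun j => A i j * A s j)) with (dot n (row A i) (row A s)). ring. }
    set (Q := sumR m (fun r => (dot n e (row A r) - dot n (row A r) (row A s) * dot n e (row A s)) ^ 2)) in *.
    assert (u * (E - dot n e (row A s) ^ 2) <= Q).
    { apply Rmult_le_reg_l with Ai2; [exact HAi|]. unfold u. rewrite <- Rmult_assoc, Rinv_r by lra. lra. }
    rewrite sumR_const. nra.
    }
  assert (HB : 2 * (INR m - 1) * D * S <=
     2 * sumR m (fun r => sumR m (fun s => if Nat.eq_dec r s then 0 else T2 r s))).
  { set (L := sumR m (fun r => sumR m (fun s => if Nat.eq_dec r s then 0 else T2 r s))).
    assert (HL : L = sumR m (fun r => sumR m (fun s => if Nat.eq_dec r s then 0 else T2 s r))).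
    { unfold L. rewrite sumR_swap. apply sumR_ext. intros r _. apply sumR_ext. intros s _.
      destruct (Nat.eq_dec s r), (Nat.eq_dec r s); subst; try lia; reflexivity. }
    replace (2 * L) with (sumR m (fun r => sumR m (fun s => if Nat.eq_dec r s then 0 else T2 r s + T2 s r))).
    2:{ replace (2 * L) with (L + L) by ring. rewrite HL at 2. unfold L. rewrite <- sumR_plus.
        apply sumR_ext. intros r _. rewrite <- sumR_plus. apply sumR_ext. intros s _.
        destruct (Nat.eq_dec r s); ring. }
    apply Rle_trans with (sumR m (fun r => sumR m (fun s => if Nat.eq_dec r s then 0
          else D * (dot n e (row A r) ^ 2 + dot n e (row A s) ^ 2)))).
    - right. rewrite (sumR_ext _ _ (fun r => sumR m (fun s => D * (dot n e (row A r) ^ 2 + dot n e (row A s) ^ 2))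
            - D * (dot n e (row A r) ^ 2 + dot n e (row A r) ^ 2))).
      2:{ intros r Hr. apply sumR_neq_r. exact Hr. }
      rewrite sumR_minus.
      rewrite (sumR_ext _ _ (fun r => D * (INR m * dot n e (row A r) ^ 2) + D * S)).
      2:{ intros r _. rewrite sumR_scal, sumR_plus, sumR_const. fold S. ring. }
      rewrite sumR_plus, sumR_const, sumR_scal, sumR_scal, sumR_scal. fold S.
      rewrite (sumR_ext _ _ (fun r => 2 * dot n e (row A r) ^ 2)) by (intros; ring).
      rewrite sumR_scal. fold S. ring.
    - apply sumR_le. intros r Hr. apply sumR_le. intros s Hs.
      destruct (Nat.eq_dec r s); [lra|].
      unfold T2. rewrite (dot_comm n (row A s) (row A r)).
      apply pair_ineq; auto. }
  assert (HSE : u * E <= S).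
  { pose proof (HAz e) as H. unfold matvec in H.
    rewrite (sumR_ext _ _ (fun i => dot n e (row A i) ^ 2)) in H.
    2:{ intros i _. unfold dot, row. rewrite (sumR_ext n (fun j => e j * A i j) (fun j => A i j * e j)) by (intros; ring). ring. }
    fold S in H. fold E in H.
    apply Rmult_le_reg_l with Ai2; [exact HAi|]. unfold u. rewrite <- Rmult_assoc, Rinv_r by lra. lra. }
  assert (HS2 : 0 <= INR m * E - S).
  { unfold S. rewrite <- sumR_const, <- sumR_minus. apply sumR_nonneg. intros s Hs.
    rewrite (HF s Hs). apply dot_nonneg. }
  assert (HE : 0 <= E) by apply dot_nonneg.
  pose proof (final_alg (INR m) u E S Hmr Hu HE HSE HS2) as Hfin.
  fold E.
  replace ((INR m * INR m - INR m) * ((1 - u / INR m) ^ 2 - D * u / INR m) * E)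
    with ((INR m * INR m - INR m) * (1 - u / INR m) ^ 2 * E - (INR m - 1) * D * (u * E)) by (field; lra).
  assert ((INR m - 1) * D * (u * E) <= (INR m - 1) * D * S).
  { apply Rmult_le_compat_l; [|exact HSE]. apply Rmult_le_pos; lra. }
  lra.
Qed.

Lemma div_le a b c d : 0 < b -> 0 < d -> a * d <= c * b -> a / b <= c / d.
Proof. intros Hb Hd H.
  apply Rmult_le_reg_r with (b*d); [nra|].
  replace (a / b * (b * d)) with (a*d) by (field; lra).
  replace (c / d * (b * d)) with (c*b) by (field; lra). exact H. Qed.

Lemma h_unimodal d t Dl : 0 <= d -> d <= t -> t <= Dl -> Dl < 1 -> Rmin (hfun d) (hfun Dl) <= hfun t.
Proof.
  intros H0 H1 H2 H3. unfold hfun.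
  destruct (Rle_dec (t + t^2) 1).
  - apply Rle_trans with (d ^ 2 * (1 - d) / (1 + d)); [apply Rmin_l|].
    apply div_le; try lra.
    assert (K : 0 <= t * (1 - t - t*d) + d * (1 - d - t*d)).
    { assert (0 <= 1 - t - t*d) by nra. assert (0 <= 1 - d - t*d) by nra. nra. }
    assert (Eq : t ^ 2 * (1 - t) * (1 + d) - d ^ 2 * (1 - d) * (1 + t) =
                 (t - d) * (t * (1 - t - t*d) + d * (1 - d - t*d))) by ring.
    assert (0 <= (t - d) * (t * (1 - t - t*d) + d * (1 - d - t*d))) by (apply Rmult_le_pos; lra).
    lra.
  - apply Rle_trans with (Dl ^ 2 * (1 - Dl) / (1 + Dl)); [apply Rmin_r|].
    apply div_le; try lra.
    assert (K : t * (1 - t - t*Dl) + Dl * (1 - Dl - t*Dl) <= 0).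
    { assert (1 - t - t*Dl <= 0) by nra. assert (1 - Dl - t*Dl <= 0) by nra. nra. }
    assert (Eq : t ^ 2 * (1 - t) * (1 + Dl) - Dl ^ 2 * (1 - Dl) * (1 + t) =
                 - (Dl - t) * (t * (1 - t - t*Dl) + Dl * (1 - Dl - t*Dl))) by ring.
    assert (0 <= (Dl - t) * - (t * (1 - t - t*Dl) + Dl * (1 - Dl - t*Dl))) by (apply Rmult_le_pos; lra).
    lra.
Qed.

Lemma hfun_nonneg t : 0 <= t < 1 -> 0 <= hfun t.
Proof. intros H. unfold hfun. apply Rmult_le_pos.
  - apply Rmult_le_pos; [apply pow2_ge_0|lra].
  - left. apply Rinv_0_lt_compat. lra. Qed.

Definition e0 : nat -> R := fun j => if Nat.eq_dec j 0 then 1 else 0.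
Lemma dot_e0 n : (1 <= n)%nat -> dot n e0 e0 = 1.
Proof. intros H. destruct n as [|n]; [lia|]. clear H. unfold dot. induction n.
  - simpl. unfold e0. simpl. ring.
  - change (sumR (S (S n)) (fun i => e0 i * e0 i)) with (sumR (S n) (fun i => e0 i * e0 i) + e0 (S n) * e0 (S n)).
    rewrite IHn. unfold e0. destruct (Nat.eq_dec (S n) 0); [lia|]. ring. Qed.

Theorem theorem1 (m n : nat) (A : nat -> nat -> R) (x b x0 : nat -> R)
  (Ainv Delta delta : R) (k : nat) :
  (m > n)%nat ->
  full_column_rank m n A ->
  standardized m n A ->
  no_two_rows_parallel m n A ->
  (forall i, (i < m)%nat -> b i = matvec n A x i) ->
  is_inf (inv_norm_set m n A) Ainv ->
  is_max_coherence m n A Delta ->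
  is_min_coherence m n A delta ->
  let Rc := frob_sq m n A * Ainv ^ 2 in
  let D := Rmin (delta ^ 2 * (1 - delta) / (1 + delta))
                (Delta ^ 2 * (1 - Delta) / (1 + Delta)) in
  expected_err m n A b x k x0 <=
    ((1 - 1 / Rc) ^ 2 - D / Rc) ^ k * (vnorm n (vsub x x0)) ^ 2.
Proof.
  intros Hmn Hrank Hstd Hpar Hb Hinf Hmax Hmin Rc D.
  assert (Hstd' : forall i, (i < m)%nat -> dot n (row A i) (row A i) = 1).
  { intros i Hi. pose proof (Hstd i Hi) as H. unfold vnorm in H.
    rewrite <- (pow2_sqrt (dot n (row A i) (row A i))) by apply dot_nonneg. rewrite H. ring. }
  assert (Hn : (1 <= n)%nat).
  { destruct n as [|n0]; [|lia]. exfalso. assert (H0m : (0 < m)%nat) by lia. pose proof (Hstd' 0%nat H0m) as Hz. unfold dot in Hz. simpl in Hz. lra. }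
  assert (Hm : (2 <= m)%nat) by lia.
  assert (Hmr : 2 <= INR m) by (apply (le_INR 2); exact Hm).
  assert (Hfrob : frob_sq m n A = INR m).
  { unfold frob_sq. rewrite <- (Rmult_1_r (INR m)), <- sumR_const. apply sumR_ext. intros i Hi.
    rewrite <- (Hstd' i Hi). unfold dot, row. apply sumR_ext. intros; ring. }
  assert (HAz : forall z, dot n z z <= Ainv ^ 2 * sumR m (fun i => matvec n A z i * matvec n A z i)).
  { intros z. set (Y := sumR m (fun i => matvec n A z i * matvec n A z i)).
    assert (HY : 0 <= Y) by (apply sumR_nonneg; intros; nra).
    destruct (Req_dec Y 0) as [HY0|HY0].
    - assert (Hz : forall j, (j < n)%nat -> z j = 0).
      { apply Hrank. apply sumR_sq_zero. exact HY0. }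
      assert (dot n z z = 0).
      { unfold dot. rewrite (sumR_ext _ _ (fun _ => 0)) by (intros j Hj; rewrite Hz by exact Hj; ring).
        rewrite sumR_const. ring. }
      rewrite H, HY0. lra.
    - destruct Hinf as [_ Hglb].
      assert (HsY : 0 < sqrt Y) by (apply sqrt_lt_R0; lra).
      assert (Hle : vnorm n z / sqrt Y <= Ainv).
      { apply Hglb. intros M HM. specialize (HM z). unfold vnorm at 1 in HM. unfold dot in HM.
        fold Y in HM. apply Rmult_le_reg_r with (sqrt Y); [exact HsY|].
        unfold Rdiv. rewrite Rmult_assoc, Rinv_l by lra. lra. }
      assert (Hv : vnorm n z <= Ainv * sqrt Y).
      { apply Rmult_le_reg_r with (/ sqrt Y); [apply Rinv_0_lt_compat; exact HsY|].
        rewrite Rmult_assoc, Rinv_r by lra. unfold Rdiv in Hle. lra. }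
      assert (Hv0 : 0 <= vnorm n z) by apply sqrt_pos.
      rewrite <- (vnorm_sq n z). rewrite <- (pow2_sqrt Y) by exact HY.
      replace (Ainv ^ 2 * sqrt Y ^ 2) with ((Ainv * sqrt Y) ^ 2) by ring.
      apply pow_incr. lra. }
  assert (HAi : 0 < Ainv ^ 2).
  { pose proof (HAz e0) as H. rewrite dot_e0 in H by exact Hn.
    assert (0 <= sumR m (fun i => matvec n A e0 i * matvec n A e0 i)) by (apply sumR_nonneg; intros; nra).
    assert (0 <= Ainv ^ 2) by apply pow2_ge_0.
    destruct (Req_dec (Ainv ^ 2) 0) as [Ha0|Ha0]; [rewrite Ha0 in H; lra | lra]. }
  destruct Hmax as [HmaxB [j1 [k1 [Hj1 [Hk1 [Hjk1 HD1]]]]]].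
  destruct Hmin as [HminB [j2 [k2 [Hj2 [Hk2 [Hjk2 HD2]]]]]].
  assert (HDl1 : Delta < 1) by (rewrite <- HD1; apply Hpar; auto).
  assert (Hd0 : 0 <= delta) by (rewrite <- HD2; apply Rabs_pos).
  assert (HdD : delta <= Delta).
  { apply Rle_trans with (Rabs (dot n (row A j1) (row A k1))); [apply HminB; auto| lra]. }
  assert (HD0 : 0 <= D).
  { apply Rmin_glb; apply (hfun_nonneg); lra. }
  assert (HDh : forall r s, (r<m)%nat -> (s<m)%nat -> r<>s -> D <= hfun (Rabs (dot n (row A r) (row A s)))).
  { intros r s Hr Hs Hrs. apply h_unimodal; auto. }
  set (rho := (1 - / Ainv ^ 2 / INR m) ^ 2 - D * / Ainv ^ 2 / INR m).
  assert (Hrho : (1 - 1 / Rc) ^ 2 - D / Rc = rho).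
  { unfold rho, Rc. rewrite Hfrob. assert (HA0 : Ainv <> 0) by (intro Hq; rewrite Hq in HAi; simpl in HAi; lra). field. repeat split; try lra; auto. }
  rewrite Hrho.
  assert (Havg : forall x0, sumR m (fun r => sumR m (fun s => if Nat.eq_dec r s then 0
      else vnorm n (vsub x (tsk_step n A b x0 r s)) ^ 2))
      <= (INR m * INR m - INR m) * rho * vnorm n (vsub x x0) ^ 2).
  { intros y0. rewrite vnorm_sq. apply avg_step; auto. }
  assert (Hmm : 0 < INR m * INR m - INR m) by nra.
  assert (Hrho0 : 0 <= rho).
  { pose proof (Havg (fun j => x j - e0 j)) as H.
    assert (Hd : vnorm n (vsub x (fun j => x j - e0 j)) ^ 2 = 1).
    { rewrite vnorm_sq, <- (dot_e0 n Hn). unfold dot, vsub. apply sumR_ext. intros; ring. }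
    rewrite Hd in H.
    assert (0 <= sumR m (fun r => sumR m (fun s => if Nat.eq_dec r s then 0
      else vnorm n (vsub x (tsk_step n A b (fun j => x j - e0 j) r s)) ^ 2))).
    { apply sumR_nonneg. intros r _. apply sumR_nonneg. intros s _.
      destruct (Nat.eq_dec r s); [lra| apply pow2_ge_0]. }
    nra. }
  clear Hrho. revert x0. induction k as [|k IH]; intros x0.
  - simpl. lra.
  - simpl expected_err.
    apply Rle_trans with (/ (INR m * INR m - INR m) * (rho ^ k *
        sumR m (fun r => sumR m (fun s => if Nat.eq_dec r s then 0
          else vnorm n (vsub x (tsk_step n A b x0 r s)) ^ 2)))).
    + apply Rmult_le_compat_l; [left; apply Rinv_0_lt_compat; exact Hmm|].
      rewrite <- sumR_scal. apply sumR_le. intros r _. rewrite <- sumR_scal. apply sumR_le. intros s _.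
      destruct (Nat.eq_dec r s); [lra| apply IH].
    + pose proof (Havg x0) as H.
      assert (Hk : 0 <= rho ^ k) by (apply pow_le; exact Hrho0).
      apply Rle_trans with (/ (INR m * INR m - INR m) * (rho ^ k *
        ((INR m * INR m - INR m) * rho * vnorm n (vsub x x0) ^ 2))).
      * apply Rmult_le_compat_l; [left; apply Rinv_0_lt_compat; exact Hmm|].
        apply Rmult_le_compat_l; [exact Hk| exact H].
      * right. simpl pow. field. lra.
Qed.
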